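(* Let $G$ be a simple graph on $n$ vertices and $1\le k<n$ an integer such that $F_k(G)$ is regular. Then $F_k(\overline{G})$ is also regular, where $\overline{G}$ is the complement of $G$.
   Context: For a simple graph $G=(V,E)$ on $n$ vertices and an integer $1\le k<n$, the $k$-token graph $F_k(G)$ is the graph whose vertices are all $k$-element subsets of $V$, two such subsets $A,B$ being adjacent whenever their symmetric difference $A\triangle B$ is a pair $\{a,b\}$ with $a$ adjacent to $b$ in $G$. *)

(* Defs.v *)
From mathcomp Require Import all_boot.
Set Implicit Arguments. Unset Strict Implicit. Unset Printing Implicit Defensive.

Definition simple_graph (T : finType) (e : rel T) : Prop :=
  irreflexive e /\ symmetric e.

Definition compl_graph (T : finType) (e : rel T) : rel T :=
  fun x y => (x != y) && ~~ e x y.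

Definition symdiff (T : finType) (A B : {set T}) : {set T} :=
  (A :\: B) :|: (B :\: A).

(* Adjacency in the k-token graph F_k(G): A triangle B = {a,b} with a ~ b in G. *)
Definition token_adj (T : finType) (e : rel T) (A B : {set T}) : bool :=
  [exists a : T, exists b : T, (symdiff A B == [set a; b]) && e a b].

Definition token_vertex (T : finType) (k : nat) (A : {set T}) : bool :=
  #|A| == k.

Definition token_deg (T : finType) (e : rel T) (k : nat) (A : {set T}) : nat :=
  #|[set B : {set T} | token_vertex k B && token_adj e A B]|.

Definition token_regular (T : finType) (e : rel T) (k : nat) : Prop :=
  exists d : nat, forall A : {set T}, token_vertex k A -> token_deg e k A = d.

(* Main.v *)
Require Import Defs.
From mathcomp Require Import all_boot zify.
Set Implicit Arguments. Unset Strict Implicit. Unset Printing Implicit Defensive.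

Lemma memf1 (T : finType) (A : {set T}) a b x : a \in A -> b \notin A ->
  (x \in A) && (x \notin A :\ a :|: [set b]) = (x == a).
Proof.
move=> aA bA; have ab : (a == b) = false by apply/eqP=> h; move: bA; rewrite -h aA.
rewrite !inE.
case: (eqVneq x a) => [->|xa]; first by rewrite aA /= ?eqxx ?ab.
case: (eqVneq x b) => [->|xb]; first by rewrite (negbTE bA).
by rewrite /=; case: (x \in A).
Qed.
Lemma memf2 (T : finType) (A : {set T}) a b x : a \in A -> b \notin A ->
  (x \notin A) && (x \in A :\ a :|: [set b]) = (x == b).
Proof.
move=> aA bA; rewrite !inE.
case: (eqVneq x b) => [->|xb]; first by rewrite bA orbT.
by rewrite orbF; case: (x \in A); rewrite ?andbF.
Qed.

Definition cut (T : finType) (e : rel T) (A : {set T}) : {set T * T} :=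
  [set p : T * T | [&& p.1 \in A, p.2 \notin A & e p.1 p.2]].

Lemma deg_cut (T : finType) (e : rel T) (k : nat) (A : {set T}) :
  irreflexive e -> symmetric e -> #|A| = k -> token_deg e k A = #|cut e A|.
Proof.
move=> irr sym hA.
pose f := fun p : T * T => A :\ p.1 :|: [set p.2].
have finj : {in cut e A &, injective f}.
  move=> [a b] [c d]; rewrite !inE /= => /and3P[aA bA _] /and3P[cA dA _] hf.
  have hf' : A :\ a :|: [set b] = A :\ c :|: [set d] := hf.
  have ha := fun x => memf1 x aA bA.
  have hc := fun x => memf1 x cA dA.
  have hb := fun x => memf2 x aA bA.
  have hd := fun x => memf2 x cA dA.
  have eac : a = c by apply/eqP; rewrite -hc -hf' ha.
  have ebd : b = d by apply/eqP; rewrite -hd -hf' hb.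
  by rewrite eac ebd.
rewrite /token_deg -(card_in_imset finj); apply: eq_card => B.
rewrite inE; apply/andP/imsetP.
- move=> [hB /existsP[a /existsP[b /andP[/eqP hs eab]]]].
  have anb : a != b by apply/eqP => h; move: eab; rewrite h irr.
  have memS : forall x, (x \in symdiff A B) = (x == a) || (x == b).
    by move=> x; rewrite hs !inE.
  have hout : forall x, x != a -> x != b -> (x \in B) = (x \in A).
    move=> x xa xb; have := memS x; rewrite (negbTE xa) (negbTE xb) /symdiff !inE.
    by case: (x \in A); case: (x \in B).
  have ha := memS a; have hb := memS b.
  rewrite eqxx /= /symdiff !inE in ha; rewrite eqxx orbT /symdiff !inE in hb.
  have cardeq : #|A :\: B| = #|B :\: A|.
    have h1 := cardsID B A; have h2 := cardsID A B.
    rewrite setIC in h1; move: h1 h2; rewrite (eqP hB) hA; lia.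
  have sub1 : forall x, (x \in A :\: B) -> (x == a) || (x == b).
    by move=> x hx; rewrite -memS /symdiff inE hx.
  have sub2 : forall x, (x \in B :\: A) -> (x == a) || (x == b).
    by move=> x hx; rewrite -memS /symdiff inE hx orbT.
  case Aa: (a \in A); case Ba: (a \in B); rewrite ?Aa ?Ba /= in ha => //.
  +
    case Ab: (b \in A); case Bb: (b \in B); rewrite ?Ab ?Bb /= in hb => //.
    * exfalso.
      have e0 : B :\: A = set0.
        apply/setP => x; rewrite in_set0; case hx: (x \in B :\: A) => //; have := sub2 x hx.
        by case/orP => /eqP ex; move: hx; rewrite ex !inE ?Aa ?Ab.
      move: cardeq; rewrite e0 cards0 => /eqP; rewrite cards_eq0 => /eqP e1.
      have : a \in A :\: B by rewrite !inE Aa Ba.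
      by rewrite e1 inE.
    * exists (a, b); first by rewrite !inE /= Aa Ab eab.
      apply/setP => x; rewrite /f !inE /=.
      case: (eqVneq x b) => [->|xb]; first by rewrite Bb orbT.
      case: (eqVneq x a) => [->|xa]; first by rewrite Ba.
      by rewrite orbF /= hout.
  +
    case Ab: (b \in A); case Bb: (b \in B); rewrite ?Ab ?Bb /= in hb => //.
    * exists (b, a); first by rewrite !inE /= Aa Ab sym eab.
      apply/setP => x; rewrite /f !inE /=.
      case: (eqVneq x a) => [->|xa]; first by rewrite Ba orbT.
      case: (eqVneq x b) => [->|xb]; first by rewrite Bb.
      by rewrite orbF /= hout.
    * exfalso.
      have e0 : A :\: B = set0.
        apply/setP => x; rewrite in_set0; case hx: (x \in A :\: B) => //; have := sub1 x hx.
        by case/orP => /eqP ex; move: hx; rewrite ex !inE ?Ba ?Bb.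
      move: cardeq; rewrite e0 cards0 => /esym/eqP; rewrite cards_eq0 => /eqP e1.
      have : a \in B :\: A by rewrite !inE Aa Ba.
      by rewrite e1 inE.
- move=> [[a b]]; rewrite !inE /= => /and3P[aA bA eab] ->.
  split.
    rewrite /token_vertex /f setUC cardsU1 !inE (negbTE bA) andbF /=.
    have := cardsD1 a A; rewrite aA hA; move=> h; apply/eqP; lia.
  apply/existsP; exists a; apply/existsP; exists b; rewrite eab andbT.
  apply/eqP/setP => x; rewrite /symdiff /f !inE.
  case: (eqVneq x a) => [->|xa]; first by rewrite aA /=; case: (eqVneq a b) => [eq|] ; [move: bA; rewrite -eq aA|].
  case: (eqVneq x b) => [->|xb]; first by rewrite (negbTE bA).
  by rewrite /=; case: (x \in A).
Qed.

Lemma cut_sum (T : finType) (e : rel T) (A : {set T}) :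
  #|cut e A| + #|cut (compl_graph e) A| = #|A| * #|~: A|.
Proof.
rewrite -cardsX -(cardsID [set p : T * T | e p.1 p.2] (setX A (~: A))).
congr (_ + _); apply: eq_card => -[x y]; rewrite !inE /= /compl_graph.
- by rewrite andbA.
- case xA: (x \in A); case yA: (y \in A); rewrite ?andbF ?andbT /= //.
  by case: (eqVneq x y) => [exy|] //; move: xA; rewrite exy yA.
Qed.

Theorem corollary1 (T : finType) (e : rel T) (k : nat) :
  simple_graph e -> 1 <= k < #|T| ->
  token_regular e k -> token_regular (compl_graph e) k.
Proof.
move=> [irr sym] _ [d hd].
have irr' : irreflexive (compl_graph e) by move=> x; rewrite /compl_graph eqxx.
have sym' : symmetric (compl_graph e).
  by move=> x y; rewrite /compl_graph sym eq_sym.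
exists (k * (#|T| - k) - d) => A hA.
have hk : #|A| = k by apply/eqP.
rewrite (deg_cut irr' sym' hk).
have := cut_sum e A; rewrite -(deg_cut irr sym hk) (hd A hA) hk; have := cardsC A; rewrite hk.
move=> h1; have -> : #|~: A| = #|T| - k by lia. move=> h2; lia.
Qed.
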